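(* Let $p\ge5$, write $x=p-2$, and consider the black metallic tree $\mathcal B_\rho$ under the rightmost assignment (the last son of each node is black). For a node $\nu$ let $u$ be the nzm-code of $\nu-1$ and $v$ the nzm-code of $\nu-2$. Then the sons of the nodes, in increasing order, have the following nzm-codes: (1) root $\nu=1$: the sons are $h+1$ (one digit) for $h=1,\dots,p-4$, then $x$; (2) black $\nu\neq1$: the sons are $u\,h$ for $h=1,\dots,p-3$; (3) white $\nu$ with nzm-signature $1$ or $x$: first son $v\,x$, then $u\,(h-1)$ for $h=2,\dots,p-2$; (4) white $\nu$ with nzm-signature $a$, $1<a<x$: the sons $u\,h$ for $h=1,\dots,p-3$, then $u\,x$. Moreover: $\mathcal B_\rho$ does not have a preferred son property for the nzm-codes, whatever the digit chosen; for every node $\nu$, the integer whose nzm-code is the nzm-code of $\nu$ followed by $1$ (the successor of $\nu$) is a son of $\nu+1$ in $\mathcal B_\rho$, namely its leftmost son or its second son; and for no assignment $\alpha$ on the black metallic tree and no digit $a\in\{1,\dots,p-2\}$ does every node $\nu$ of $\mathcal B_\alpha$ have exactly one son whose nzm-code is the nzm-code of $\nu$ followed by $a$.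
   Context: Fix $p\ge5$. Metallic numbers: $m_{-1}=0$, $m_0=1$, $m_{n+2}=(p-2)m_{n+1}-m_n$. With $x=p-2$, $d=p-3$, the nzm-code of a positive integer $n$ is the unique word $a_k\cdots a_0$ over $\{1,\dots,p-2\}$ with $n=\sum a_im_i$ containing no factor $x\,d^j\,x$ ($j\ge0$); its nzm-signature is the last digit $a_0$; $w\,e$ denotes the word $w$ followed by the digit $e$. Black metallic tree under an assignment $\alpha$, $\mathcal B_\alpha$: nodes are the positive integers, each black or white; the root $1$ is black; nodes are processed in increasing order and node $\nu$ receives $p-2$ sons if white and $p-3$ sons if black, namely the smallest integers not yet used, in increasing order; an assignment specifies for each node the position (leftmost $=1$) of its unique black son among its sons, other sons being white. The rightmost assignment $\rho$ puts the black son at the last position. *)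

(* Defs.v *)
From mathcomp Require Import all_boot.
Set Implicit Arguments. Unset Strict Implicit. Unset Printing Implicit Defensive.

(* Metallic numbers, shifted so that metallic p n = m_n for n >= 0:
   m_0 = 1, m_1 = p-2, m_{n+2} = (p-2) m_{n+1} - m_n  (m_{-1} = 0). *)
Fixpoint mpair (p n : nat) : nat * nat :=
  match n with
  | 0 => (1, p - 2)
  | n'.+1 => let (a, b) := mpair p n' in (b, (p - 2) * b - a)
  end.
Definition metallic (p n : nat) : nat := (mpair p n).1.

(* Words are sequences of digits written most significant first:
   [:: a_k; ...; a_0].  "w e" (w followed by digit e) is rcons w e. *)
Definition wordval (p : nat) (w : seq nat) : nat :=
  \sum_(i < size w) nth 0 w i * metallic p (size w - 1 - i).

Definition forbidden (p j : nat) : seq nat := (p - 2) :: rcons (nseq j (p - 3)) (p - 2).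

Definition is_nzm_code (p n : nat) (w : seq nat) : Prop :=
  all (fun a => 0 < a <= p - 2) w /\
  (forall j, ~~ infix (forbidden p j) w) /\
  wordval p w = n.

Definition nsons (p : nat) (black : bool) : nat := if black then p - 3 else p - 2.

(* gen p pos k = colours (true = black) of all nodes created after
   processing nodes 1..k; entry i is the colour of node i+1.
   pos v c = position (1-based) of the black son of node v, of colour c. *)
Fixpoint gen (p : nat) (pos : nat -> bool -> nat) (k : nat) : seq bool :=
  match k with
  | 0 => [:: true]
  | k'.+1 =>
      let s := gen p pos k' in
      let c := nth false s k' in
      s ++ mkseq (fun i => i.+1 == pos k c) (nsons p c)
  end.

Definition black_pos p pos (v : nat) : bool := nth false (gen p pos v) v.-1.

Definition black (p : nat) (alpha : nat -> nat) (v : nat) : bool :=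
  black_pos p (fun u _ => alpha u) v.

Definition sons (p : nat) (alpha : nat -> nat) (v : nat) : seq nat :=
  iota (size (gen p (fun u _ => alpha u) v.-1)).+1 (nsons p (black p alpha v)).

Definition assignment (p : nat) (alpha : nat -> nat) : Prop :=
  forall v, 0 < v -> 0 < alpha v <= nsons p (black p alpha v).

Definition rho (p : nat) (v : nat) : nat :=
  nsons p (black_pos p (fun _ c => nsons p c) v).

Definition has_codes (p : nat) (s : seq nat) (L : seq (seq nat)) : Prop :=
  size s = size L /\
  forall i, i < size L -> is_nzm_code p (nth 0 s i) (nth [::] L i).

Definition preferred_son (p : nat) (alpha : nat -> nat) (a : nat) : Prop :=
  forall v, 0 < v -> forall w, is_nzm_code p v w ->
    exists n, n \in sons p alpha v /\ is_nzm_code p n (rcons w a).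

(* Main.v *)
Require Import Defs.
From mathcomp Require Import all_boot zify.
Set Implicit Arguments. Unset Strict Implicit.
Lemma met0 p : metallic p 0 = 1. Proof. by []. Qed.
Lemma met1 p : metallic p 1 = p - 2. Proof. by []. Qed.
Lemma mpairS p n : mpair p n.+1 = ((mpair p n).2, (p-2)*(mpair p n).2 - (mpair p n).1).
Proof. rewrite /=; by case: (mpair p n). Qed.
Lemma metS p n : metallic p n.+1 = (mpair p n).2.
Proof. by rewrite /metallic mpairS. Qed.
Lemma metSS p n : metallic p n.+2 = (p - 2) * metallic p n.+1 - metallic p n.
Proof. by rewrite metS mpairS /= -metS. Qed.
Lemma met_mono p n : 5 <= p -> metallic p n <= metallic p n.+1 /\ metallic p n.+2 + metallic p n = (p-2) * metallic p n.+1.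
Proof.
move=> hp; elim: n => [|n [IH1 IH2]].
  rewrite metSS met0 met1. split; nia.
have h1 : metallic p n.+1 <= metallic p n.+2 by rewrite metSS; nia.
split => //. rewrite metSS. nia.
Qed.

Fixpoint EX p r := if r is a :: r' then (a == p-2) || ((a == p-3) && EX p r') else false.
Fixpoint validL p r := if r is a::r' then [&& 0 < a <= p-2, (a != p-2) || ~~ EX p r' & validL p r'] else true.
Fixpoint inc p r := if r is a::r' then
  (if a < p-3 then a.+1 :: r' else if (a == p-3) && ~~ EX p r' then (p-2) :: r' else 1 :: inc p r')
  else [:: 1].
Fixpoint SS p k r := if r is a::r' then a * metallic p k + SS p k.+1 r' else 0.

Lemma SS_rec p k r : 5 <= p -> SS p k.+2 r + SS p k r = (p-2) * SS p k.+1 r.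
Proof.
move=> hp; elim: r k => [|a r IH] k /=; first lia.
have [_ h] := met_mono k hp. have := IH k.+1. nia.
Qed.

Definition delta p r := if EX p r then p - 3 else p - 2.

Lemma inc_props p r : 5 <= p -> validL p r ->
  [/\ SS p 0 (inc p r) = (SS p 0 r).+1, SS p 1 (inc p r) = SS p 1 r + delta p r & validL p (inc p r)].
Proof.
move=> hp; elim: r => [|a r IH] /=.
  by rewrite met0 met1 /delta /=; split => /=; nia.
move=> /and3P [ha hax hv].
have [I0 I1 Iv] := IH hv.
have R1 := SS_rec 0 r hp. have R2 := SS_rec 0 (inc p r) hp.
rewrite /delta /=.
case: ltnP => h1.
  rewrite /= met0 met1 hv. have -> : (a == p-2) = false by apply/eqP; lia.
  have -> : (a == p-3) = false by apply/eqP; lia.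
  have -> : (a.+1 == p-2) = false by apply/eqP; lia.
  split => /=; nia.
have [Ha|Ha] : a = p - 3 \/ a = p - 2 by lia.
  rewrite Ha in hax *.
  have -> : (p - 3 == p - 3) = true by apply/eqP.
  have -> : (p - 3 == p - 2) = false by apply/eqP; lia.
  move: I1; rewrite /delta.
  case E: (EX p r) => /= I1.
    rewrite met0 met1 Iv /= I1.
    split => /=; nia.
  rewrite met0 met1 hv E /= eqxx /=.
  split => /=; nia.
rewrite Ha in hax *.
have E : EX p r = false by move: hax; rewrite eqxx /=; case: (EX p r).
have -> : (p - 2 == p - 3) = false by apply/eqP; lia.
move: I1; rewrite /delta E /= => I1.
rewrite met0 met1 Iv /= I1 eqxx.
split => /=; nia.
Qed.

Definition code p n := iter n (inc p) [::].
Lemma codeS p n : code p n.+1 = inc p (code p n). Proof. by rewrite /code iterS. Qed.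
Lemma code_props p n : 5 <= p -> validL p (code p n) /\ SS p 0 (code p n) = n.
Proof.
move=> hp; elim: n => [|n [IH1 IH2]] //. rewrite codeS.
have [A B C] := inc_props hp IH1. by rewrite A IH2.
Qed.
Definition sigma p n := SS p 1 (code p n).
Lemma sigmaS p n : 5 <= p -> sigma p n.+1 = sigma p n + delta p (code p n).
Proof. move=> hp; rewrite /sigma codeS. have [V _] := code_props n hp. by have [] := inc_props hp V. Qed.

Lemma code_run p n : 5 <= p -> code p (sigma p n).+1 = 1 :: code p n ->
  forall h, 0 < h <= p - 3 -> code p (sigma p n + h) = h :: code p n.
Proof.
move=> hp H1; elim=> [|h IH] // /andP [_ hh].
case: h IH hh => [|h] IH hh; first by rewrite addn1.
rewrite addnS codeS IH /=; last lia.
by have -> : h.+1 < p - 3 by lia.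
Qed.

Lemma code_sigma1 p n : 5 <= p -> code p (sigma p n).+1 = 1 :: code p n.
Proof.
move=> hp; elim: n => [|n IH]; first by [].
have R := code_run hp IH.
rewrite sigmaS // /delta.
case E: (EX p (code p n)).
  rewrite codeS R; last lia.
  rewrite /= ltnn eqxx E /=. done.
have -> : (sigma p n + (p - 2)).+1 = (sigma p n + (p - 3)).+2 by lia.
rewrite codeS codeS R; last lia.
rewrite /= ltnn eqxx E /=.
have -> : (p - 2 < p - 3) = false by lia.
have -> : (p - 2 == p - 3) = false by apply/eqP; lia.
by [].
Qed.

Lemma code_son p n h : 5 <= p -> 0 < h <= p - 3 -> code p (sigma p n + h) = h :: code p n.
Proof. move=> hp; exact: (code_run hp (code_sigma1 n hp)). Qed.

Lemma code_sonx p n : 5 <= p -> ~~ EX p (code p n) -> code p (sigma p n + (p-2)) = (p-2) :: code p n.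
Proof.
move=> hp E.
have -> : sigma p n + (p - 2) = (sigma p n + (p - 3)).+1 by lia.
rewrite codeS code_son; last lia; last done.
by rewrite /= ltnn eqxx (negbTE E).
Qed.

Definition Wk p k (w : seq nat) :=
  \sum_(i < size w) nth 0 w i * metallic p (size w - 1 - i + k).

Lemma Wk_rcons p k w a : Wk p k (rcons w a) = Wk p k.+1 w + a * metallic p k.
Proof.
rewrite /Wk size_rcons big_ord_recr /= nth_rcons ltnn eqxx.
have -> : (size w).+1 - 1 - size w + k = k by lia.
congr (_ + _). apply: eq_bigr => i _.
rewrite nth_rcons (ltn_ord i). congr (_ * metallic p _). have := ltn_ord i. lia.
Qed.

Lemma Wk_rev p k r : Wk p k (rev r) = SS p k r.
Proof.
elim: r k => [|a r IH] k; first by rewrite /Wk big_ord0.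
by rewrite rev_cons Wk_rcons IH /= addnC.
Qed.

Lemma wordval_rev p r : wordval p (rev r) = SS p 0 r.
Proof.
rewrite -(Wk_rev p 0) /wordval /Wk. apply: eq_bigr => i _. by rewrite addn0.
Qed.

Lemma prefix_EX p j r : prefix (rcons (nseq j (p-3)) (p-2)) r -> EX p r.
Proof.
elim: j r => [|j IH] [|b r] //=.
  by move=> /andP [/eqP <- _]; rewrite eqxx.
move=> /andP [/eqP <- H]. by rewrite eqxx IH // orbT.
Qed.

Lemma valid_noinfix p j r : validL p r -> ~~ infix (forbidden p j) r.
Proof.
elim: r => [|a r IH] //= /and3P [_ hax hv].
rewrite negb_or IH // andbT /forbidden /=.
apply/negP => /andP [/eqP ha H].
move: hax; rewrite -ha eqxx /=. by rewrite (prefix_EX H).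
Qed.

Lemma rev_forbidden p j : rev (forbidden p j) = forbidden p j.
Proof.
by rewrite /forbidden rev_cons rev_rcons rev_nseq.
Qed.

Lemma valid_all p r : validL p r -> all (fun a => 0 < a <= p - 2) r.
Proof. elim: r => [|a r IH] //= /and3P [-> _ /IH] //. Qed.

Lemma nzm_of p r n : validL p r -> SS p 0 r = n -> is_nzm_code p n (rev r).
Proof.
move=> V E; split; [|split].
- by rewrite all_rev valid_all.
- move=> j; rewrite -rev_forbidden infix_rev. exact: valid_noinfix.
- by rewrite wordval_rev.
Qed.

Lemma nzm_code p n : 5 <= p -> is_nzm_code p n (rev (code p n)).
Proof. move=> hp; have [V E] := code_props n hp. exact: nzm_of. Qed.

Lemma genS p pos k : gen p pos k.+1 = gen p pos k ++
  mkseq (fun i => i.+1 == pos k.+1 (nth false (gen p pos k) k)) (nsons p (nth false (gen p pos k) k)).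
Proof. by []. Qed.

Definition g p k := gen p (fun _ c => nsons p c) k.
Definition col p v := nth false (g p v) v.-1.
Definition F p v := (size (g p v.-1)).+1.

Section T.
Variable p : nat.
Hypothesis hp : 5 <= p.

Lemma nsons_ge c : 2 <= nsons p c.
Proof. rewrite /nsons; case: c; lia. Qed.

Lemma gen_size pos k : k < size (gen p pos k).
Proof.
elim: k => [|k IH] //. rewrite genS size_cat size_mkseq. have := nsons_ge (nth false (gen p pos k) k). lia.
Qed.

Lemma gen_prefix pos k K : k <= K -> exists s, gen p pos K = gen p pos k ++ s.
Proof.
elim: K => [|K IH] kK.
  have -> : k = 0 by lia. by exists [::]; rewrite cats0.
case: (ltnP k K.+1) => h.
  have [s Hs] := IH (ltnSE h). by exists (s ++ mkseq (fun i => i.+1 == pos K.+1 (nth false (gen p pos K) K)) (nsons p (nth false (gen p pos K) K))); rewrite genS Hs catA.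
have -> : k = K.+1 by lia. by exists [::]; rewrite cats0.
Qed.

Lemma gen_stable pos k K i : k <= K -> i < size (gen p pos k) -> nth false (gen p pos K) i = nth false (gen p pos k) i.
Proof. move=> kK hi; have [s ->] := gen_prefix pos kK. by rewrite nth_cat hi. Qed.
End T.

Section T2.
Variable p : nat.
Hypothesis hp : 5 <= p.

Lemma gen_rho k : gen p (fun u _ => rho p u) k = g p k.
Proof.
elim: k => [|k IH] //. rewrite genS IH.
have -> : rho p k.+1 = nsons p (nth false (g p k) k).
  rewrite /rho /black_pos /= -/(g p k.+1). congr nsons. by rewrite nth_cat gen_size.
by [].
Qed.

Lemma black_col v : black p (rho p) v = col p v.
Proof. by rewrite /black /black_pos gen_rho. Qed.

Lemma sons_eq v : sons p (rho p) v = iota (F p v) (nsons p (col p v)).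
Proof. by rewrite /sons gen_rho black_col. Qed.

Lemma F1 : F p 1 = 2. Proof. by []. Qed.

Lemma col1 : col p 1 = true. Proof. by []. Qed.

Lemma gS k : g p k.+1 = g p k ++ mkseq (fun i => i.+1 == nsons p (nth false (g p k) k)) (nsons p (nth false (g p k) k)).
Proof. by rewrite /g genS. Qed.

Lemma col_eq v : 0 < v -> nth false (g p v.-1) v.-1 = col p v.
Proof.
move=> hv; rewrite /col /g. symmetry; apply: gen_stable; [done | lia | exact: (gen_size hp)].
Qed.

Lemma FS v : 0 < v -> F p v.+1 = F p v + nsons p (col p v).
Proof.
move=> hv; rewrite /F /= -(col_eq hv).
case: v hv => [|v] // _ /=. rewrite gS size_cat size_mkseq. lia.
Qed.

Lemma F_gt v : v < F p v.
Proof. rewrite /F. have := gen_size hp (fun _ c => nsons p c) v.-1. rewrite -/(g p _). lia. Qed.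

Lemma col_son v i : 0 < v -> i < nsons p (col p v) -> col p (F p v + i) = (i.+1 == nsons p (col p v)).
Proof.
case: v => [|v] // _ hi.
have Hc := col_eq (ltn0Sn v). rewrite /= in Hc.
have HF := F_gt v.+1.
rewrite /col /g.
have -> : (F p v.+1 + i).-1 = size (g p v) + i by rewrite /F /=; lia.
rewrite (gen_stable hp (k := v.+1)); last first.
  rewrite -/(g p _) gS size_cat size_mkseq Hc. lia.
  lia.
rewrite -/(g p _) gS nth_cat ltnNge leq_addr /= addKn.
rewrite Hc nth_mkseq //.
have Hs : v < size (g p v) := gen_size hp _ v.
by rewrite nth_cat Hs Hc.
Qed.

Lemma parent j : 2 <= j -> exists v i, [/\ 0 < v, v < j, i < nsons p (col p v) & j = F p v + i].
Proof.
elim: j => [|j IH] // hj.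
case: (ltnP 2 j.+1) => h2; last first.
  have -> : j.+1 = 2 by lia. exists 1, 0. rewrite col1 F1. have := nsons_ge hp true. split; lia.
have [v [i [h0 h1 h2' h3]]] := IH (ltnSE h2).
case: (ltnP i.+1 (nsons p (col p v))) => hi.
  exists v, i.+1; split => //; lia.
exists v.+1, 0. have := F_gt v. have := FS h0. have := nsons_ge hp (col p v.+1). split; lia.
Qed.

End T2.

Section M.
Variable p : nat.
Hypothesis hp : 5 <= p.

Definition sgn n := head 0 (code p n).

Lemma code_cons n : 0 < n -> code p n = sgn n :: behead (code p n).
Proof. case: n => [|n] // _. rewrite /sgn codeS. by case: (code p n) => [|a u] /=; [|case: ifP => _; [|case: ifP]]. Qed.

Lemma sig_range n : 0 < n -> 0 < sgn n <= p - 2.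
Proof.
move=> hn. have [V _] := code_props n hp. rewrite (code_cons hn) /= in V.
by case/and3P: V.
Qed.

Lemma sig_next n : 0 < n ->
  [/\ sgn n < p - 3 -> sgn n.+1 = (sgn n).+1,
      sgn n = p - 3 -> sgn n.+1 = p - 2 \/ sgn n.+1 = 1
    & sgn n = p - 2 -> sgn n.+1 = 1].
Proof.
move=> hn. have -> : sgn n.+1 = head 0 (inc p (sgn n :: behead (code p n))).
  by rewrite {1}/sgn codeS {1}(code_cons hn).
move: (sgn n) (behead _) => a u /=.
split.
- by move=> ->.
- move=> ->. rewrite ltnn eqxx /=. by case: (EX p _); [right|left].
- move=> ->. have -> : (p - 2 < p - 3) = false by lia.
  have -> : (p - 2 == p - 3) = false by apply/eqP; lia.
  by [].
Qed.

Lemma sig_EX n : 0 < n -> EX p (code p n) = (sgn n.+1 == 1).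
Proof.
move=> hn. have [V _] := code_props n hp.
rewrite /sgn codeS (code_cons hn) /=. rewrite (code_cons hn) /= in V.
case/and3P: V => ha hax _. set a := sgn n in ha hax *. set u := behead _ in hax *.
case: ltnP => h1.
  have -> : (a == p-2) = false by apply/eqP; lia.
  have -> : (a == p-3) = false by apply/eqP; lia.
  rewrite /=; apply/esym/eqP; lia.
have [Ha|Ha] : a = p - 3 \/ a = p - 2 by lia.
  rewrite Ha eqxx /=. have -> : (p - 3 == p - 2) = false by apply/eqP; lia.
  case: (EX p u) => //=. apply/esym/eqP; lia.
rewrite Ha eqxx /=. have -> : (p - 2 == p - 3) = false by apply/eqP; lia. by [].
Qed.

Lemma sigma0 : sigma p 0 = 0. Proof. by []. Qed.

Definition P v :=
  (F p v = (sigma p v.-1).+1 /\ (col p v \/ 2 <= sgn v <= p - 3)) \/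
  (F p v = sigma p v.-1 /\ ~~ col p v /\ (sgn v = 1 \/ sgn v = p - 2) /\ ~~ EX p (code p v.-2)).


Lemma sig_son n h : 0 < h <= p - 3 -> sgn (sigma p n + h) = h.
Proof. move=> hh; by rewrite /sgn code_son. Qed.
Lemma sig_sonx n : ~~ EX p (code p n) -> sgn (sigma p n + (p - 2)) = p - 2.
Proof. move=> hh; by rewrite /sgn code_sonx. Qed.

Lemma T_facts j : 2 <= j -> (forall w, 2 <= w < j -> P w) ->
  [/\ col p j -> sgn j = p-3 \/ sgn j = p-2,
      ~~ col p j -> sgn j = p-3 -> col p j.+1,
      ~~ col p j -> sgn j = p-2 -> ~~ col p j.+1
    & col p j -> ~~ col p j.+1].
Proof.
move=> hj HP.
have [v [i [hv0 hvj hi ->]]] := parent hp hj.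
set n := nsons p (col p v) in hi.
have Cj : col p (F p v + i) = (i.+1 == n) by rewrite col_son.
have Cj1 : i.+1 < n -> col p (F p v + i).+1 = (i.+2 == n) by move=> h; rewrite -addnS col_son.
have T1 : col p (F p v + i) -> ~~ col p (F p v + i).+1.
  rewrite Cj => /eqP Hn. have -> : (F p v + i).+1 = F p v.+1 + 0 by rewrite FS // -/n; lia.
  rewrite col_son //; last by have := nsons_ge hp (col p v.+1); lia.
  apply/negP => /eqP H. have := nsons_ge hp (col p v.+1). lia.
have Hn : n = p - 3 \/ n = p - 2 by rewrite /n /nsons; case: (col p v); [left|right].
have Hsig : (v = 1 /\ sgn (F p v + i) = i.+2) \/
            (1 < v /\ sgn (F p v + i) = i.+1) \/
            (1 < v /\ n = p - 2 /\ sgn (F p v + i) = if i == 0 then p - 2 else i).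
  case: (ltnP 1 v) => hv1; last first.
    have E1 : v = 1 by lia. subst v. left; split => //.
    rewrite F1 /n col1 /= in hi *.
    have -> : 2 + i = sigma p 0 + i.+2 by rewrite sigma0.
    case: (ltnP i.+2 (p - 2)) => h.
      rewrite sig_son //; lia.
    have -> : i.+2 = p - 2 by lia. by rewrite sig_sonx.
  have [[HF Hc]|[HF [Hc [Hs HE]]]] := HP v (introT andP (conj hv1 hvj)).
    right; left; split => //. rewrite HF addSnnS.
    case: (ltnP i.+1 (p - 2)) => h.
      rewrite sig_son //; lia.
    have Hi : i.+1 = p - 2 by move: hi; rewrite /n /nsons; case: (col p v) => /=; lia.
    rewrite Hi sig_sonx //.
    case: Hc => [Hc|Hc].
      move: hi; rewrite /n /nsons Hc. lia.
    have -> : v.-1 = v.-2.+1 by lia.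
    rewrite sig_EX; last lia. have -> : v.-2.+2 = v by lia.
    apply/negP => /eqP; lia.
  right; right. have Hn2 : n = p - 2 by rewrite /n /nsons (negbTE Hc).
  split => //; split => //.
  case: i hi {Cj Cj1 T1} => [|i] hi /=.
    rewrite addn0 HF. have -> : v.-1 = v.-2.+1 by lia.
    rewrite sigmaS // /delta (negbTE HE) sig_sonx //.
  rewrite HF sig_son //; lia.
split => //.
- rewrite Cj => /eqP Hc. case: Hsig => [[E1 ->]|[[_ ->]|[_ [Hn2 ->]]]].
  + subst v. move: Hc; rewrite /n col1 /=. lia.
  + lia.
  + case: ifP => /eqP; lia.
- rewrite Cj => Hc Hs. rewrite Cj1; last by move: Hc => /eqP; lia.
  case: Hsig => [[E1 Hs']|[[_ Hs']|[_ [Hn2 Hs']]]]; rewrite Hs' in Hs.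
  + apply/eqP. subst v. rewrite /n col1 /=. lia.
  + apply/eqP. move: Hc => /eqP. lia.
  + move: Hs. case: ifP => /eqP. lia. move=> _ Hi. subst i. move: Hc; rewrite Hn2 => /eqP; lia.
- rewrite Cj => Hc Hs. rewrite Cj1; last by move: Hc => /eqP; lia.
  case: Hsig => [[E1 Hs']|[[_ Hs']|[_ [Hn2 Hs']]]]; rewrite Hs' in Hs.
  + subst v. move: Hc; rewrite /n col1 /=. move=> /eqP. lia.
  + lia.
  + move: Hs. case: ifP => /eqP.
      move=> -> _. apply/negP => /eqP. lia.
    lia.
Qed.

Lemma P2 : P 2.
Proof.
left. have E : F p 2 = p - 1 by rewrite FS // F1 col1 /=; lia.
have S1 : sigma p 1 = p - 2 by rewrite sigmaS // sigma0.
split; first by rewrite E /= S1; lia.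
right. have H2 : sgn 2 = 2 by have := @sig_son 0 2; rewrite sigma0 /=; apply; lia.
rewrite H2; lia.
Qed.

Lemma P_step v : 2 <= v -> P v -> (forall w, 2 <= w < v -> P w) -> P v.+1.
Proof.
move=> hv Pv HP.
have [T2 T3 T4 T1] := T_facts hv HP.
have HFS := FS hp (ltnW hv).
have Hsg : sigma p v = sigma p v.-1 + delta p (code p v.-1).
  have {1}-> : v = v.-1.+1 by lia. by rewrite sigmaS.
have HE : EX p (code p v.-1) = (sgn v == 1).
  rewrite sig_EX; last lia. by have -> : v.-1.+1 = v by lia.
have [N1 N2 N3] := sig_next (ltnW hv).
have R := sig_range (ltnW hv).
rewrite /delta HE in Hsg.
case: Pv => [[HF Hc]|[HF [Hc [Hs HEx]]]].
- case: (boolP (col p v)) => Hcv.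
    have Hs1 : (sgn v == 1) = false by apply/negP => /eqP H; case: (T2 Hcv); lia.
    right. rewrite Hs1 in Hsg. split; first by rewrite HFS Hcv /nsons Hsg HF; lia.
    split; first exact: T1.
    split; first by case: (T2 Hcv) => H; [case: (N2 H) => ->|rewrite (N3 H)]; lia.
    have -> : v.+1.-2 = v.-1 by lia. by rewrite HE Hs1.
  case: Hc => Hc; first by rewrite Hc in Hcv.
  have Hs1 : (sgn v == 1) = false by apply/negP => /eqP H; lia.
  left. rewrite Hs1 in Hsg. split; first by rewrite HFS (negbTE Hcv) /nsons Hsg HF; lia.
  case: (ltnP (sgn v) (p - 3)) => h.
    right. rewrite N1 //. lia.
  left. apply: T3 => //. lia.
- case: Hs => Hs.
    left. rewrite Hs eqxx in Hsg. split; first by rewrite HFS (negbTE Hc) /nsons Hsg HF; lia.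
    right. rewrite N1; lia.
  have Hs1 : (sgn v == 1) = false by apply/negP => /eqP H; lia.
  right. rewrite Hs1 in Hsg. split; first by rewrite HFS (negbTE Hc) /nsons Hsg HF; lia.
  split; first exact: T4.
  split; first by rewrite N3 //; left.
  have -> : v.+1.-2 = v.-1 by lia. by rewrite HE Hs1.
Qed.

Lemma P_all v : 2 <= v -> P v.
Proof.
suff H : forall N v, 2 <= v <= N -> P v by move=> hv; apply: (H v); lia.
elim=> [|N IH] w hw; first lia.
case: (ltnP w N.+1) => h; first by apply: IH; lia.
have -> : w = N.+1 by lia.
case: (ltnP N 2) => hN.
  have -> : N.+1 = 2 by lia. exact: P2.
apply: P_step => //; [apply: IH; lia | move=> w' hw'; apply: IH; lia].
Qed.

End M.

Lemma has_codes_iota p a n L : size L = n ->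
  (forall i, i < n -> is_nzm_code p (a + i) (nth [::] L i)) -> has_codes p (iota a n) L.
Proof.
move=> hs H; split; first by rewrite size_iota.
move=> i hi; rewrite nth_iota; [apply: H|]; lia.
Qed.

Lemma last_rev (r : seq nat) : last 0 (rev r) = head 0 r.
Proof. case: r => //= a r. by rewrite rev_cons last_rcons. Qed.

Lemma nzm1 p a : 0 < a <= p - 2 -> is_nzm_code p a [:: a].
Proof. move=> h. apply: (@nzm_of p [:: a] a) => /=; [rewrite h | rewrite met0]; lia. Qed.

Lemma no_son1 p a n : 5 <= p -> 0 < a -> n \in iota 2 (p - 3) -> is_nzm_code p n (rcons [:: 1] a) -> False.
Proof.
move=> hp ha; rewrite mem_iota => hn [_ [_ hw]].
have : wordval p (rev [:: a; 1]) = n by [].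
rewrite wordval_rev /= met0 met1. lia.
Qed.

Lemma code_word p n h : 5 <= p -> 0 < h <= p - 3 -> is_nzm_code p (sigma p n + h) (rcons (rev (code p n)) h).
Proof. move=> hp hh. rewrite -rev_cons -code_son //. exact: nzm_code. Qed.

Lemma code_wordx p n : 5 <= p -> ~~ EX p (code p n) -> is_nzm_code p (sigma p n + (p-2)) (rcons (rev (code p n)) (p-2)).
Proof. move=> hp hh. rewrite -rev_cons -code_sonx //. exact: nzm_code. Qed.

Theorem theorem15 (p : nat) (hp : 5 <= p) :
  (* (1) root *)
  has_codes p (sons p (rho p) 1)
    (rcons [seq [:: h.+1] | h <- iota 1 (p - 4)] [:: p - 2]) /\
  (* (2) black non-root nodes *)
  (forall v, 1 < v -> black p (rho p) v ->
     exists u, is_nzm_code p v.-1 u /\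
       has_codes p (sons p (rho p) v) [seq rcons u h | h <- iota 1 (p - 3)]) /\
  (* (3), (4) white nodes, according to the nzm-signature *)
  (forall v, 0 < v -> ~~ black p (rho p) v ->
     exists w, is_nzm_code p v w /\
       ((last 0 w = 1 \/ last 0 w = p - 2) ->
          exists u vv, is_nzm_code p v.-1 u /\ is_nzm_code p v.-2 vv /\
            has_codes p (sons p (rho p) v)
              (rcons vv (p - 2) :: [seq rcons u h.-1 | h <- iota 2 (p - 3)])) /\
       (1 < last 0 w < p - 2 ->
          exists u, is_nzm_code p v.-1 u /\
            has_codes p (sons p (rho p) v)
              (rcons [seq rcons u h | h <- iota 1 (p - 3)] (rcons u (p - 2))))) /\
  (* no preferred son property, whatever the digit *)
  (forall a, 0 < a <= p - 2 -> ~ preferred_son p (rho p) a) /\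
  (* successor of v is the leftmost or second son of v+1 *)
  (forall v, 0 < v ->
     exists w, is_nzm_code p v w /\
       exists n, is_nzm_code p n (rcons w 1) /\
         (n = nth 0 (sons p (rho p) v.+1) 0 \/ n = nth 0 (sons p (rho p) v.+1) 1)) /\
  (* no assignment / digit gives exactly one such son at every node *)
  (forall alpha, assignment p alpha -> forall a, 0 < a <= p - 2 ->
     ~ (forall v, 0 < v -> forall w, is_nzm_code p v w ->
          exists! n, n \in sons p alpha v /\ is_nzm_code p n (rcons w a))).
Proof.
have C1 : is_nzm_code p 1 [:: 1] by apply: nzm1; lia.
split.
  rewrite sons_eq // F1 col1 /nsons. apply: has_codes_iota.
    by rewrite size_rcons size_map size_iota; lia.
  move=> i hi. rewrite nth_rcons size_map size_iota.
  case: ltnP => h1.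
    rewrite (nth_map 0) ?size_iota // nth_iota //. apply: nzm1; lia.
  have -> : i = p - 4 by lia. rewrite eqxx. have -> : 2 + (p - 4) = p - 2 by lia.
  apply: nzm1; lia.
split.
  move=> v hv; rewrite black_col // => Hc.
  exists (rev (code p v.-1)); split; first exact: nzm_code.
  have [[HF _]|[_ [Hc' _]]] := P_all hp hv; last by rewrite Hc in Hc'.
  rewrite sons_eq // Hc /nsons HF. apply: has_codes_iota; first by rewrite size_map size_iota.
  move=> i hi. rewrite (nth_map 0) ?size_iota // nth_iota // addSnnS. apply: code_word; lia.
split.
  move=> v hv; rewrite black_col // => Hc.
  have hv2 : 1 < v by case: v hv Hc => [|[|v]] //.
  exists (rev (code p v)); split; first exact: nzm_code.
  rewrite last_rev -/(sgn p v).
  have HE : EX p (code p v.-1) = (sgn p v == 1).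
    rewrite sig_EX //; last lia. by have -> : v.-1.+1 = v by lia.
  split.
    move=> Hs.
    have [[HF [Hc'|Hc']]|[HF [_ [_ HEx]]]] := P_all hp hv2.
    + by rewrite Hc' in Hc.
    + lia.
    exists (rev (code p v.-1)), (rev (code p v.-2)); split; first exact: nzm_code.
    split; first exact: nzm_code.
    rewrite sons_eq // (negbTE Hc) /nsons HF. apply: has_codes_iota; first by rewrite /= size_map size_iota; lia.
    case=> [|i] hi /=.
      have -> : v.-1 = v.-2.+1 by lia.
      rewrite sigmaS // /delta (negbTE HEx) addn0. exact: code_wordx.
    rewrite (nth_map 0) ?size_iota; last lia. rewrite nth_iota; last lia.
    have -> : (2 + i).-1 = i.+1 by lia. apply: code_word; lia.
  move=> Hs.
  have [[HF _]|[HF [_ [Hs' _]]]] := P_all hp hv2; last by lia.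
  exists (rev (code p v.-1)); split; first exact: nzm_code.
  rewrite sons_eq // (negbTE Hc) /nsons HF. apply: has_codes_iota.
    by rewrite size_rcons size_map size_iota; lia.
  move=> i hi. rewrite nth_rcons size_map size_iota addSnnS.
  case: ltnP => h1.
    rewrite (nth_map 0) ?size_iota // nth_iota //. apply: code_word; lia.
  have -> : i = p - 3 by lia. rewrite eqxx. have -> : (p - 3).+1 = p - 2 by lia.
  apply: code_wordx => //. rewrite HE. apply/negP => /eqP; lia.
split.
  move=> a ha Hpref.
  have [n [Hn Hc]] := Hpref 1 (ltn0Sn 0) _ C1.
  rewrite sons_eq // F1 col1 /nsons in Hn. apply: (no_son1 hp _ Hn Hc); lia.
split.
  move=> v hv. exists (rev (code p v)); split; first exact: nzm_code.
  exists (sigma p v).+1; split.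
    rewrite -rev_cons -code_sigma1 //. exact: nzm_code.
  have hv2 : 1 < v.+1 by lia.
  have Hn2 := nsons_ge hp (col p v.+1).
  rewrite sons_eq //.
  have [[HF _]|[HF _]] := P_all hp hv2.
    left. rewrite nth_iota; last lia. by rewrite HF addn0.
  right. rewrite nth_iota; last lia. by rewrite HF addn1.
move=> alpha _ a ha H.
have [n [[Hn Hc] _]] := H 1 (ltn0Sn 0) _ C1.
move: Hn. rewrite /sons /black /black_pos /= => Hn.
apply: (no_son1 hp _ Hn Hc); lia.
Qed.
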